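(* Let $d,n\ge 1$, let $\kappa\ge 1$ divide $d$, set $d'=d/\kappa$, let $r\ge 2$ and $\mathbf r=(r,\dots,r)\in\mathbb{N}^d$. Let $A_1,\dots,A_{d'}\in\mathbb{R}^{m\times n^\kappa}$ and let $\mathcal{A}(\mathcal{Y})=\mathcal{Y}\times_1A_1\times_2\cdots\times_{d'}A_{d'}$ for $\mathcal{Y}\in\mathbb{R}^{n^\kappa\times\cdots\times n^\kappa}$ ($d'$ modes). Suppose that each $A_i$ has the RIP$(\varepsilon,\mathcal{S}_{1,2})$ property, and let $\delta=4d'r^d\varepsilon$ with $\delta<1$. Then $\mathcal{A}\circ\mathcal{R}$ has the TRIP$(\delta,\mathbf r)$ property, i.e. $$(1-\delta)\|\mathcal{X}\|^2\le\|\mathcal{A}(\mathcal{R}(\mathcal{X}))\|^2\le(1+\delta)\|\mathcal{X}\|^2$$ for all $\mathcal{X}\in\mathbb{R}^{n\times\cdots\times n}$ ($d$ modes) with HOSVD rank at most $\mathbf r$.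
   Context: $\|\cdot\|$ denotes the Frobenius norm of a tensor. The $j$-mode product of $\mathcal{X}\in\mathbb{R}^{p_1\times\cdots\times p_D}$ with $U\in\mathbb{R}^{q\times p_j}$ is the tensor $\mathcal{X}\times_jU\in\mathbb{R}^{p_1\times\cdots\times q\times\cdots\times p_D}$ with entries $(\mathcal{X}\times_jU)_{i_1,\dots,\ell,\dots,i_D}=\sum_{i_j=1}^{p_j}\mathcal{X}_{i_1,\dots,i_j,\dots,i_D}U_{\ell,i_j}$. A $d$-mode tensor $\mathcal{X}\in\mathbb{R}^{n\times\cdots\times n}$ has HOSVD (multilinear) rank at most $(r,\dots,r)$ if there are subspaces $\mathcal{U}_1,\dots,\mathcal{U}_d\subset\mathbb{R}^n$ of dimension $r$ with $\mathcal{X}\in\mathcal{U}_1\otimes\cdots\otimes\mathcal{U}_d$. The reshaping operator $\mathcal{R}:\mathbb{R}^{n\times\cdots\times n}\ (d\text{ modes})\to\mathbb{R}^{n^\kappa\times\cdots\times n^\kappa}\ (d'\text{ modes})$ is the unique linear map with $\mathcal{R}(\mathbf{x}^1\circ\cdots\circ\mathbf{x}^d)=\bigcirc_{i=1}^{d'}\big(\mathbf{x}^{\kappa(i-1)+1}\otimes\cdots\otimes\mathbf{x}^{\kappa i}\big)$, where $\circ$ is the outer product and $\otimes$ the Kronecker product of vectors. Let $\mathcal{S}_1=\{\mathbf{u}^1\otimes\cdots\otimes\mathbf{u}^\kappa:\mathbf{u}^i\in\mathbb{S}^{n-1}\}\subset\mathbb{R}^{n^\kappa}$, $\mathcal{S}_2=\{(\mathbf{x}+\mathbf{y})/\|\mathbf{x}+\mathbf{y}\|_2:\mathbf{x},\mathbf{y}\in\mathcal{S}_1,\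 \langle\mathbf{x},\mathbf{y}\rangle=0\}$ and $\mathcal{S}_{1,2}=\mathcal{S}_1\cup\mathcal{S}_2$. A linear map $L$ has the RIP$(\varepsilon,\mathcal{S})$ property if $(1-\varepsilon)\|s\|^2\le\|L(s)\|^2\le(1+\varepsilon)\|s\|^2$ for all $s\in\mathcal{S}$. A linear map has the TRIP$(\delta,\mathbf r)$ property if $(1-\delta)\|\mathcal{X}\|^2\le\|\cdot(\mathcal{X})\|^2\le(1+\delta)\|\mathcal{X}\|^2$ for all $\mathcal{X}$ of HOSVD rank at most $\mathbf r$. *)

(* Defs.v *)
From HB Require Import structures.
From mathcomp Require Import all_boot all_order all_algebra.
From mathcomp Require Import reals.
Set Implicit Arguments. Unset Strict Implicit. Unset Printing Implicit Defensive.
Import Order.TTheory GRing.Theory Num.Theory.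
Local Open Scope ring_scope.

Definition idx (D n : nat) := {ffun 'I_D -> 'I_n}.

Definition tensor (R : realType) (D n : nat) := idx D n -> R.

Definition tnorm2 (R : realType) D n (X : tensor R D n) : R :=
  \sum_(i : idx D n) X i ^+ 2.

Definition vnorm2 (R : realType) N (v : 'cV[R]_N) : R := \sum_(i < N) v i 0 ^+ 2.
Definition vdot (R : realType) N (v w : 'cV[R]_N) : R := \sum_(i < N) v i 0 * w i 0.

(* HOSVD (multilinear) rank at most (r,...,r): there are subspaces U_1..U_D
   of R^n (row spaces of n x n matrices) of dimension r with
   X in U_1 (x) ... (x) U_D, i.e. X is a finite sum of outer products
   u^1 o ... o u^D with u^j in U_j. *)
Definition hosvd_rank_le (R : realType) D n (r : nat) (X : tensor R D n) : Prop :=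
  exists U : 'I_D -> 'M[R]_n,
    (forall j, \rank (U j) = r) /\
    exists (N : nat) (u : 'I_N -> 'I_D -> 'rV[R]_n),
      (forall k j, (u k j <= U j)%MS) /\
      forall i : idx D n, X i = \sum_(k < N) \prod_(j < D) u k j 0 (i j).

(* b-th (0-based, most significant first) base-n digit of an index of
   R^{n^kappa}: Kronecker ordering, (j_0,...,j_{kappa-1}) |-> sum_b j_b n^(kappa-1-b) *)
Definition kdigit (n kappa : nat) (J : nat) (b : nat) : nat :=
  ((J %/ n ^ (kappa.-1 - b)) %% n)%N.

(* entry of a row vector at a nat index (0 outside range) *)
Definition rent (R : realType) n (u : 'rV[R]_n) (k : nat) : R :=
  if insub k is Some i then u 0 i else 0.

Definition kron (R : realType) n kappa (u : 'I_kappa -> 'rV[R]_n) : 'cV[R]_(n ^ kappa) :=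
  \col_(J < n ^ kappa) \prod_(b < kappa) rent (u b) (kdigit n kappa J b).

Definition S1 (R : realType) n kappa : 'cV[R]_(n ^ kappa) -> Prop :=
  fun x => exists u : 'I_kappa -> 'rV[R]_n,
    (forall b, \sum_(i < n) u b 0 i ^+ 2 = 1) /\ x = kron u.

Definition S2 (R : realType) n kappa : 'cV[R]_(n ^ kappa) -> Prop :=
  fun s => exists x y, S1 x /\ S1 y /\ vdot x y = 0 /\
    s = (Num.sqrt (vnorm2 (x + y)))^-1 *: (x + y).

Definition S12 (R : realType) n kappa : 'cV[R]_(n ^ kappa) -> Prop :=
  fun s => S1 s \/ S2 s.

Definition RIP (R : realType) m N (A : 'M[R]_(m, N)) (eps : R) (S : 'cV[R]_N -> Prop) : Prop :=
  forall s, S s -> (1 - eps) * vnorm2 s <= vnorm2 (A *m s) /\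
                   vnorm2 (A *m s) <= (1 + eps) * vnorm2 s.

(* The reshaping operator R : R^{n x...x n} (d modes) -> R^{n^k x...x n^k}
   (d/k modes): mode j of X (0-based) goes to mode j / k of the result, as
   Kronecker digit j mod k. *)
Definition treshape (R : realType) (d n kappa : nat) (X : tensor R d n)
  : tensor R (d %/ kappa) (n ^ kappa) :=
  fun J => \sum_(i : idx d n)
    (if [forall a : 'I_(d %/ kappa), forall j : 'I_d,
           (val j %/ kappa == val a)%N ==>
           (val (i j) == kdigit n kappa (J a) (val j %% kappa))%N]
     then X i else 0).

Definition multi_mode (R : realType) (D N m : nat) (A : 'I_D -> 'M[R]_(m, N))
  (Y : tensor R D N) : tensor R D m :=
  fun l => \sum_(J : idx D N) Y J * \prod_(a < D) A a (l a) (J a).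

(* Main.v *)
Require Import Defs.
From HB Require Import structures.
From mathcomp Require Import all_boot all_order all_algebra.
From mathcomp Require Import reals.
From mathcomp Require Import zify ring lra.
Import Order.TTheory GRing.Theory Num.Theory.
Local Open Scope ring_scope.

Set Implicit Arguments. Unset Strict Implicit. Unset Printing Implicit Defensive.
Lemma split_nat (T : Type) (idx : T) (op : Monoid.law idx) k n (F : nat -> T) :
  \big[op/idx]_(0 <= J < k * n) F J =
  \big[op/idx]_(0 <= a < k) \big[op/idx]_(0 <= t < n) F (t + a * n)%N.
Proof.
have H a : \big[op/idx]_((a * n)%N <= j < (a.+1 * n)%N) F j =
    \big[op/idx]_(0 <= t < n) F (t + a * n)%N.
  by rewrite -{1}(add0n (a * n)%N) big_addn mulSn addnK.
by rewrite big_nat_mul; apply: eq_bigr => a _; apply: H.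
Qed.




Lemma kron_sum (R : realType) n kappa (f : nat -> nat -> R) : (0 < n)%N ->
  \sum_(0 <= J < n ^ kappa) \prod_(b < kappa) f b (kdigit n kappa J b) =
  \prod_(b < kappa) \sum_(t < n) f b t.
Proof.
move=> n0; elim: kappa f => [|k IH] f.
  by rewrite expn0 big_nat1 !big_ord0.
rewrite [RHS]big_ord_recr /= -(IH f) expnSr split_nat.
rewrite mulr_suml; apply: eq_big_nat => a _.
rewrite big_mkord mulr_sumr; apply: eq_bigr => t _.
rewrite big_ord_recr /=; congr (_ * _).
  apply: eq_bigr => b _; congr (f _ _).
  have e : (k - b = (k.-1 - b).+1)%N by have := ltn_ord b; lia.
  rewrite /kdigit /= e expnS divnMA.
  by rewrite divnDMl // (divn_small (ltn_ord t)) add0n.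
by rewrite /kdigit /= subnn expn0 divn1 addnC modnMDl modn_small.
Qed.


Section GS.
Variable R : realType.

Lemma GS n k (B : 'M[R]_(k, n)) : row_free B ->
  exists Q : 'M[R]_(k, n), Q *m Q^T = 1%:M /\ (B <= Q)%MS.
Proof.
elim: k B => [|k IH] B fB.
  by exists B; split; [apply/matrixP => i; case: i|].
have eB : B = col_mx (usubmx (B : 'M_(1 + k, n))) (dsubmx (B : 'M_(1 + k, n))).
  by rewrite vsubmxK.
set b := usubmx _ in eB; set B' := dsubmx _ in eB.
have rB : \rank B = k.+1 by apply/eqP.
have eR : \rank B = \rank (b + B')%MS by rewrite eB addsmxE.
have rB' : \rank B' = k.
  apply/eqP; rewrite eqn_leq rank_leq_row /=.
  have H := (mxrank_adds_leqif b B').1.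
  move: (rank_leq_row b) H; rewrite -eR rB; lia.
have [Q' [oQ' sQ']] := IH B' (introT eqP rB').
have rQ' : \rank Q' = k.
  apply/eqP; rewrite eqn_leq rank_leq_row /=.
  by rewrite -{1}(mxrank1 R k) -oQ' mxrankM_maxl.
have sQ'B' : (Q' <= B')%MS.
  by case: (mxrank_leqif_sup sQ') => _ <-; rewrite rB' rQ'.
set w := b - b *m Q'^T *m Q'.
have wQ : w *m Q'^T = 0.
  by rewrite /w mulmxBl -!mulmxA oQ' mulmx1 subrr.
have wn0 : w != 0.
  apply/eqP => w0; have : (b <= B')%MS.
    have eb : b = b *m Q'^T *m Q'.
      by apply/eqP; rewrite -subr_eq0 -/w w0.
    rewrite eb.
    by apply: submx_trans sQ'B'; exact: submxMl.
  move=> sbB; move: rB; rewrite eR.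
  by rewrite (addsmx_idPr sbB) rB' => /n_Sn.
have ew : (w *m w^T) 0 0 = \sum_i w 0 i ^+ 2.
  by rewrite mxE; apply: eq_bigr => i _; rewrite expr2 [w^T _ _]mxE.
have wpos : 0 < (w *m w^T) 0 0.
  have h0 : forall i : 'I_n, true -> 0 <= w 0 i ^+ 2 by move=> *; apply: sqr_ge0.
  rewrite ew lt_def sumr_ge0 ?andbT //.
  apply/negP => /eqP/(psumr_eq0P h0) H; move/negP: wn0; apply; apply/eqP/matrixP => i j.
  rewrite (ord1 i) [RHS]mxE; apply/eqP; rewrite -sqrf_eq0; apply/eqP.
  exact: H.
set c := Num.sqrt ((w *m w^T) 0 0).
have cpos : 0 < c by rewrite sqrtr_gt0.
set q := c^-1 *: w.
suff : exists Q : 'M_(1 + k, n), Q *m Q^T = 1%:M /\ (B <= Q)%MS by [].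
exists (col_mx q Q'); split.
  rewrite tr_col_mx mul_col_row oQ'.
  have qQ : q *m Q'^T = 0 by rewrite /q -scalemxAl wQ scaler0.
  have Qq : Q' *m q^T = 0 by rewrite -(trmxK Q') -trmx_mul qQ trmx0.
  have qq : q *m q^T = 1%:M.
    have e1 : w *m w^T = (c ^+ 2)%:M.
      apply/matrixP => i j; rewrite (ord1 i) (ord1 j) [RHS]mxE eqxx mulr1n.
      by rewrite sqr_sqrtr ?ltW.
    rewrite /q linearZ /= -scalemxAl -scalemxAr e1 !scale_scalar_mx; congr (_%:M).
    by rewrite mulrA -expr2 -exprMn mulVf ?gt_eqF // expr1n.
  rewrite (scalar_mx_block 1 k); congr block_mx; [exact: qq|exact: qQ|exact: Qq].
have -> : (B <= col_mx q Q')%MS = (col_mx b B' <= col_mx q Q')%MS by rewrite eB.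
rewrite col_mx_sub; apply/andP; split.
  have -> : b = c *: q + (b *m Q'^T) *m Q'.
    by rewrite /q scalerA divff ?gt_eqF // scale1r /w subrK.
  apply: addmx_sub; first by apply: scalemx_sub; rewrite -addsmxE addsmxSl.
  by apply: submx_trans (submxMl _ _) _; rewrite -addsmxE addsmxSr.
by apply: submx_trans sQ' _; rewrite -addsmxE addsmxSr.
Qed.
End GS.


Section Pair.
Variable R : realType.

Lemma vnorm2D N (v w : 'cV[R]_N) : vnorm2 (v + w) = vnorm2 v + vnorm2 w + 2 * vdot v w.
Proof.
rewrite /vnorm2 /vdot mulr_sumr -!big_split /=; apply: eq_bigr => i _.
by rewrite mxE; ring.
Qed.

Lemma vnorm2Z N c (v : 'cV[R]_N) : vnorm2 (c *: v) = c ^+ 2 * vnorm2 v.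
Proof.
by rewrite /vnorm2 mulr_sumr; apply: eq_bigr => i _; rewrite mxE exprMn.
Qed.

Lemma vnorm2_ge0 N (v : 'cV[R]_N) : 0 <= vnorm2 v.
Proof. by apply: sumr_ge0 => i _; apply: sqr_ge0. Qed.

Lemma vnorm2_vdot N (v : 'cV[R]_N) : vnorm2 v = vdot v v.
Proof. by apply: eq_bigr => i _; rewrite expr2. Qed.

Lemma pair_bound m n kappa (A : 'M[R]_(m, n ^ kappa)) eps (x y : 'cV[R]_(n ^ kappa)) :
  RIP A eps (@S12 R n kappa) -> S1 x -> S1 y -> vnorm2 x = 1 -> vnorm2 y = 1 ->
  (vdot x y = 0 \/ x = y) ->
  `|vdot (A *m x) (A *m y) - vdot x y| <= 2 * eps /\ 0 <= eps.
Proof.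
move=> hA Sx Sy nx ny.
have [ax1 ax2] := hA x (or_introl Sx); rewrite nx mulr1 in ax1 ax2.
have e0 : 0 <= eps by lra.
case=> [oxy | <-]; last first.
  rewrite -!vnorm2_vdot nx; split => //; rewrite ler_norml; apply/andP; split; lra.
have [ay1 ay2] := hA y (or_introl Sy); rewrite ny mulr1 in ay1 ay2.
have nxy : vnorm2 (x + y) = 2 by rewrite vnorm2D nx ny oxy; ring.
set s := (Num.sqrt (vnorm2 (x + y)))^-1 *: (x + y).
have Ss : S12 s by right; exists x, y.
have [as1 as2] := hA s Ss.
have c2 : (Num.sqrt (vnorm2 (x + y)))^-1 ^+ 2 = 2^-1.
  by rewrite exprVn sqr_sqrtr ?nxy.
rewrite /s -scalemxAr !vnorm2Z c2 nxy mulmxDr vnorm2D in as1 as2.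
rewrite oxy subr0; split => //; rewrite ler_norml; apply/andP; split; nra.
Qed.
End Pair.


Section Q.
Variable R : realType.

Lemma prod_dev_seq (I : Type) (s : seq I) (g e : I -> R) eps : 0 <= eps ->
  (forall i, `|e i| <= 1) -> (forall i, `|g i - e i| <= 2 * eps) ->
  `|\prod_(i <- s) e i| <= 1 /\
  `|\prod_(i <- s) g i - \prod_(i <- s) e i| <= (1 + 2 * eps) ^+ size s - 1.
Proof.
move=> e0 he hg; elim: s => [|a s [IH1 IH2]].
  split; first by rewrite big_nil normr1.
  by rewrite !big_nil subrr normr0 /=.
rewrite !big_cons /= normrM; split.
  by rewrite -[X in _ <= X]mulr1; apply: ler_pM; rewrite ?normr_ge0 ?he.
set G := \prod_(i <- s) g i in IH2 *; set E := \prod_(i <- s) e i in IH1 IH2 *.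
have -> : g a * G - e a * E = g a * (G - E) + (g a - e a) * E by ring.
apply: le_trans (ler_normD _ _) _; rewrite !normrM exprS.
have hga : `|g a| <= 1 + 2 * eps.
  have -> : g a = e a + (g a - e a) by ring.
  by apply: le_trans (ler_normD _ _) _; apply: lerD.
have := hg a; have := normr_ge0 (g a); have := normr_ge0 (G - E).
have := normr_ge0 (g a - e a); have := normr_ge0 E.
move: `|g a| `|G - E| `|g a - e a| `|E| ((1 + 2 * eps) ^+ size s) IH1 IH2 hga.
move=> p1 p2 p3 p4 K h1 h2 h3 *; nra.
Qed.

Lemma prod_dev (I : finType) (g e : I -> R) eps : 0 <= eps ->
  (forall i, `|e i| <= 1) -> (forall i, `|g i - e i| <= 2 * eps) ->
  `|\prod_i g i - \prod_i e i| <= (1 + 2 * eps) ^+ #|I| - 1.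
Proof.
move=> e0 he hg.
have h (F : I -> R) : \prod_i F i = \prod_(i <- enum I) F i by rewrite big_enum.
rewrite !h cardT.
by have [] := prod_dev_seq (enum I) e0 he hg.
Qed.

Lemma pow_bound (x : R) k : 0 <= x -> k%:R * x <= 2^-1 ->
  (1 + x) ^+ k <= 1 + 2 * k%:R * x.
Proof.
move=> x0; elim: k => [|k IH] hk; first by rewrite expr0 mulr0 mul0r addr0.
have hk' : k%:R * x <= 2^-1.
  by apply: le_trans hk; rewrite ler_wpM2r // ler_nat.
have := IH hk'; rewrite exprS -natr1 in hk *.
have := exprn_ge0 k (addr_ge0 ler01 x0); move: ((1 + x) ^+ k) => P.
have h2 : 0 <= k%:R :> R by [].
move: (k%:R : R) h2 hk hk' => K *; nra.
Qed.
End Q.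


Definition mk N (H : (0 < N)%N) k : 'I_N := Ordinal (ltn_pmod k H).
Lemma mkE N (H : (0 < N)%N) k : (k < N)%N -> val (mk H k) = k.
Proof. by move=> kN; rewrite /= modn_small. Qed.

Section Main.
Variables (R : realType) (d n kappa r m : nat).
Hypotheses (n0 : (0 < n)%N) (k0 : (0 < kappa)%N) (hkd : (kappa %| d)%N) (d0 : (0 < d)%N).
Local Notation D := (d %/ kappa)%N.
Lemma dD : d = (D * kappa)%N. Proof. by rewrite divnK. Qed.
Lemma D0 : (0 < D)%N. Proof. by move: d0; rewrite {1}dD muln_gt0 => /andP[]. Qed.

Definition jab (a : 'I_D) (b : 'I_kappa) : 'I_d := mk d0 (b + a * kappa).
Lemma jab_lt (a : 'I_D) (b : 'I_kappa) : (b + a * kappa < d)%N.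
Proof.
have e := dD; have := ltn_ord a; have := ltn_ord b.
move: (nat_of_ord a) (nat_of_ord b) e; move: (d %/ kappa)%N => z x y e; nia.
Qed.
Lemma jabE a b : val (jab a b) = (b + a * kappa)%N.
Proof. exact: mkE (jab_lt a b). Qed.
Lemma jab_div a b : (jab a b %/ kappa)%N = a.
Proof. by rewrite jabE divnDMl // divn_small. Qed.
Lemma jab_mod a b : (jab a b %% kappa)%N = b.
Proof. by rewrite jabE addnC modnMDl modn_small. Qed.

Lemma prod_regroup (F : 'I_d -> R) :
  \prod_(j < d) F j = \prod_(a < D) \prod_(b < kappa) F (jab a b).
Proof.
have -> : \prod_(j < d) F j = \prod_(0 <= j < d) F (mk d0 j).
  rewrite big_mkord; apply: eq_bigr => j _; congr F; apply: val_inj.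
  by rewrite mkE.
rewrite [in X in \big[_/_]_(0 <= _ < X) _]dD split_nat big_mkord.
by apply: eq_bigr => a _; rewrite big_mkord.
Qed.

Definition phi (J : idx D (n ^ kappa)) : idx d n :=
  [ffun j : 'I_d => mk n0 (kdigit n kappa (J (mk D0 (j %/ kappa))) (j %% kappa))].

Lemma kdigit_lt N J b : (kdigit n N J b < n)%N.
Proof. by rewrite /kdigit ltn_pmod. Qed.

Lemma treshapeE (X : tensor R d n) J : treshape X J = X (phi J).
Proof.
rewrite /treshape (bigD1 (phi J)) //=.
rewrite ifT; last first.
  apply/forallP => a; apply/forallP => j; apply/implyP => /eqP ja.
  rewrite /phi ffunE mkE ?kdigit_lt //; apply/eqP; congr (kdigit _ _ (J _) _).
  by apply: val_inj; rewrite mkE // ltn_divLR // -dD.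

rewrite big1 ?addr0 // => i /negbTE ineq; rewrite ifF //; apply/negbTE.
apply: contraFN ineq => /forallP H; apply/eqP/ffunP => j.
have Hj := H (mk D0 (j %/ kappa)); move/forallP: Hj => /(_ j).
rewrite mkE; last by rewrite ltn_divLR // -dD.
rewrite eqxx /= => /eqP ij; apply: val_inj => /=; rewrite ij /phi ffunE mkE ?kdigit_lt //.
Qed.

Lemma prodM (I : finType) (F G : I -> R) :
  \prod_i (F i * G i) = \prod_i F i * \prod_i G i.
Proof. exact: big_split. Qed.

Lemma sum_prod2 (I J : finType) (F G : I -> J -> R) :
  \sum_(f : {ffun I -> J}) (\prod_i F i (f i)) * (\prod_i G i (f i)) =
  \prod_i \sum_j F i j * G i j.
Proof. by rewrite bigA_distr_bigA; apply: eq_bigr => f _; rewrite prodM. Qed.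

Lemma rentE (v : 'rV[R]_n) k : (k < n)%N -> rent v k = v 0 (mk n0 k).
Proof.
move=> kn; rewrite /rent; case: insubP => [i _ ei|]; last by rewrite kn.
by congr (v 0 _); apply: val_inj; rewrite mkE.
Qed.

Lemma kron_sum' N (f : nat -> nat -> R) :
  \sum_(J < n ^ N) \prod_(b < N) f b (kdigit n N J b) =
  \prod_(b < N) \sum_(t < n) f b t.
Proof. by rewrite -(kron_sum N f n0) big_mkord. Qed.

Lemma kron_vdot (v w : 'I_kappa -> 'rV[R]_n) :
  vdot (kron v) (kron w) = \prod_b \sum_(i < n) v b 0 i * w b 0 i.
Proof.
rewrite /vdot (eq_bigr (fun J : 'I_(n ^ kappa) => \prod_b (rent (v b) (kdigit n kappa J b) * rent (w b) (kdigit n kappa J b)))); last by move=> J _; rewrite /kron !mxE prodM.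
pose f b t := rent (v (mk k0 b)) t * rent (w (mk k0 b)) t.
have mkb (b : 'I_kappa) : mk k0 b = b by apply: val_inj; rewrite mkE.
transitivity (\sum_(J < n ^ kappa) \prod_(b < kappa) f b (kdigit n kappa J b)).
  by apply: eq_bigr => J _; apply: eq_bigr => b _; rewrite /f mkb.
rewrite kron_sum'; apply: eq_bigr => b _; apply: eq_bigr => t _.
by rewrite /f !rentE // mkb; have -> : mk n0 t = t by apply: val_inj; rewrite mkE.
Qed.

Lemma norm_expand (T : finType) (Dd N : nat) (Cf : T -> R)
    (f : T -> 'I_Dd -> 'I_N -> R) :
  \sum_(l : idx Dd N) (\sum_P Cf P * \prod_a f P a (l a)) ^+ 2 =
  \sum_P \sum_P' Cf P * Cf P' * \prod_a \sum_t f P a t * f P' a t.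
Proof.
under eq_bigr do rewrite expr2 mulr_suml.
under eq_bigr do under eq_bigr do rewrite mulr_sumr.
rewrite exchange_big; apply: eq_bigr => P _.
rewrite exchange_big; apply: eq_bigr => P' _.
under eq_bigr do rewrite mulrACA.
by rewrite -mulr_sumr (sum_prod2 (f P) (f P')).
Qed.

Variable q : 'I_d -> 'I_r -> 'I_n -> R.
Definition u (P : idx d r) (a : 'I_D) (b : 'I_kappa) : 'rV[R]_n :=
  \row_t q (jab a b) (P (jab a b)) t.
Definition x P a : 'cV[R]_(n ^ kappa) := kron (u P a).

Variables (C : idx d r -> R) (X : tensor R d n).
Hypothesis hX : forall i, X i = \sum_P C P * \prod_j q j (P j) (i j).

Lemma XphiE J : X (phi J) = \sum_P C P * \prod_a x P a (J a) 0.
Proof.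
rewrite hX; apply: eq_bigr => P _; congr (_ * _).
rewrite prod_regroup; apply: eq_bigr => a _.
rewrite /x /kron mxE; apply: eq_bigr => b _.
rewrite rentE ?kdigit_lt // mxE /phi ffunE jab_div jab_mod.
by have -> : mk D0 a = a by apply: val_inj; rewrite mkE.
Qed.

Lemma multi_modeE (A : 'I_D -> 'M[R]_(m, n ^ kappa)) l :
  multi_mode A (treshape X) l = \sum_P C P * \prod_a (A a *m x P a) (l a) 0.
Proof.
rewrite /multi_mode.
under eq_bigr do rewrite treshapeE XphiE mulr_suml.
rewrite exchange_big; apply: eq_bigr => P _.
under eq_bigr do rewrite -mulrA.
rewrite -mulr_sumr; congr (_ * _).
rewrite (sum_prod2 (fun a j => x P a j 0) (fun a j => A a (l a) j)); apply: eq_bigr => a _.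
by rewrite mxE; apply: eq_bigr => t _; rewrite mulrC.
Qed.

Hypothesis hq : forall j p p', \sum_(t < n) q j p t * q j p' t = (p == p')%:R.

Lemma tnormX0 : tnorm2 X = \sum_P \sum_P' C P * C P' * \prod_j (P j == P' j)%:R.
Proof.
rewrite /tnorm2; under eq_bigr do rewrite hX.
rewrite (norm_expand C (fun P j t => q j (P j) t)).
by apply: eq_bigr => P _; apply: eq_bigr => P' _; under eq_bigr do rewrite hq.
Qed.

Lemma tnormX : tnorm2 X = \sum_P C P ^+ 2.
Proof.
rewrite tnormX0; apply: eq_bigr => P _; rewrite (bigD1 P) //=.
rewrite [X in _ + X]big1 => [|P' nP].
  by rewrite addr0 big1 ?mulr1 ?expr2 // => j _; rewrite eqxx.
 case: (pickP (fun j => P j != P' j)) => [j Hj | H].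
  by rewrite (bigD1 j) //= (negbTE Hj) mul0r mulr0.
by case/eqP: nP; apply/ffunP => j; move/negbFE/eqP: (H j).
Qed.

Lemma vdot_x P P' a :
  vdot (x P a) (x P' a) = \prod_b (P (jab a b) == P' (jab a b))%:R.
Proof.
rewrite /x kron_vdot; apply: eq_bigr => b _; rewrite -(hq (jab a b)).
by apply: eq_bigr => t _; rewrite !mxE.
Qed.

Lemma tnormX' : tnorm2 X = \sum_P \sum_P' C P * C P' * \prod_a vdot (x P a) (x P' a).
Proof.
rewrite tnormX0; apply: eq_bigr => P _; apply: eq_bigr => P' _.
by rewrite prod_regroup; congr (_ * _); apply: eq_bigr => a _; rewrite vdot_x.
Qed.

Lemma tnormA (A : 'I_D -> 'M[R]_(m, n ^ kappa)) :
  tnorm2 (multi_mode A (treshape X)) =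
  \sum_P \sum_P' C P * C P' * \prod_a vdot (A a *m x P a) (A a *m x P' a).
Proof.
rewrite /tnorm2; under eq_bigr do rewrite multi_modeE.
by rewrite (norm_expand C (fun P a t => (A a *m x P a) t 0)).
Qed.

Lemma vnorm2E N (v : 'cV[R]_N) : vnorm2 v = vdot v v.
Proof. by apply: eq_bigr => i _; rewrite expr2. Qed.

Lemma S1_x P a : S1 (x P a).
Proof.
exists (u P a); split => // b.
transitivity (\sum_(t < n) q (jab a b) (P (jab a b)) t * q (jab a b) (P (jab a b)) t).
  by apply: eq_bigr => t _; rewrite mxE expr2.
by rewrite hq eqxx.
Qed.

Lemma vnorm_x P a : vnorm2 (x P a) = 1.
Proof. by rewrite vnorm2E vdot_x big1 // => b _; rewrite eqxx. Qed.

Lemma x_cases P P' a : vdot (x P a) (x P' a) = 0 \/ x P a = x P' a.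
Proof.
case: (pickP (fun b => P (jab a b) != P' (jab a b))) => [b Hb | H].
  by left; rewrite vdot_x (bigD1 b) //= (negbTE Hb) mul0r.
right; apply/matrixP => J j; rewrite /x /kron !mxE; apply: eq_bigr => b _.
by rewrite /u; move/negbFE/eqP: (H b) => ->.
Qed.

Lemma AMGM2 (a b : R) : `|a| * `|b| <= (a ^+ 2 + b ^+ 2) / 2.
Proof.
rewrite -(real_normK (num_real a)) -(real_normK (num_real b)).
have := sqr_ge0 (`|a| - `|b|); move: `|a| `|b| => y z h; nra.
Qed.

Lemma main_bound (A : 'I_D -> 'M[R]_(m, n ^ kappa)) eps :
  (forall a, RIP (A a) eps (@S12 R n kappa)) -> (0 < r)%N ->
  4 * D%:R * r%:R ^+ d * eps < 1 ->
  `|tnorm2 (multi_mode A (treshape X)) - tnorm2 X| <=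
    4 * D%:R * r%:R ^+ d * eps * tnorm2 X.
Proof.
move=> hA r0 hdel.
have pb P P' a : `|vdot (A a *m x P a) (A a *m x P' a) - vdot (x P a) (x P' a)|
    <= 2 * eps /\ 0 <= eps.
  apply: pair_bound => //; [exact: S1_x | exact: S1_x | exact: vnorm_x |
    exact: vnorm_x | exact: x_cases].
have e0 : 0 <= eps.
  by have [] := pb [ffun => mk r0 0] [ffun => mk r0 0] (mk D0 0).
have hE P P' a : `|vdot (x P a) (x P' a)| <= 1.
  case: (x_cases P P' a) => [->|->]; first by rewrite normr0 ler01.
  by rewrite -vnorm2E vnorm_x normr1.
set K := (1 + 2 * eps) ^+ D - 1.
have rd1 : 1 <= r%:R ^+ d :> R by apply: exprn_ege1; rewrite ler1n.
have hK : K <= 4 * D%:R * eps.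
  have h1 : D%:R * (2 * eps) <= 2^-1.
    have hD0 : 0 <= D%:R :> R by [].
    have hDe : 0 <= D%:R * eps :> R by apply: mulr_ge0.
    move: (D%:R : R) (r%:R ^+ d : R) hD0 hDe rd1 hdel => z w *; nra.
  have := pow_bound (mulr_ge0 (ler0n _ 2) e0) h1.
  by rewrite /K; lra.
have K0 : 0 <= K by rewrite /K subr_ge0 exprn_ege1 // lerDl mulr_ge0.
have step1 : `|tnorm2 (multi_mode A (treshape X)) - tnorm2 X| <=
    \sum_P \sum_P' `|C P| * `|C P'| * K.
  rewrite tnormA tnormX' -sumrB; apply: le_trans (ler_norm_sum _ _ _) _.
  apply: ler_sum => P _; rewrite -sumrB; apply: le_trans (ler_norm_sum _ _ _) _.
  apply: ler_sum => P' _; rewrite -mulrBr normrM normrM.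
  apply: ler_wpM2l; first by apply: mulr_ge0; apply: normr_ge0.
  rewrite /K -[X in _ ^+ X](card_ord D); apply: prod_dev => // a.
  by have [] := pb P P' a.
have step2 : \sum_P \sum_P' `|C P| * `|C P'| <= r%:R ^+ d * tnorm2 X.
  apply: le_trans (_ : \sum_P \sum_P' (C P ^+ 2 + C P' ^+ 2) / 2 <= _).
    by apply: ler_sum => P _; apply: ler_sum => P' _; apply: AMGM2.
  under eq_bigr do rewrite -mulr_suml big_split /= sumr_const.
  rewrite -mulr_suml big_split /= sumr_const sumrMnl -tnormX.
  have cM : #|idx d r| = (r ^ d)%N by rewrite card_ffun !card_ord.
  rewrite cM -[tnorm2 X *+ _]mulr_natr natrX; move: (tnorm2 X) (r%:R ^+ d : R) => y z; lra.
apply: le_trans step1 _.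
have -> : \sum_P \sum_P' `|C P| * `|C P'| * K = (\sum_P \sum_P' `|C P| * `|C P'|) * K.
  by rewrite mulr_suml; apply: eq_bigr => P _; rewrite mulr_suml.
have T0 : 0 <= \sum_P \sum_P' `|C P| * `|C P'|.
  by apply: sumr_ge0 => P _; apply: sumr_ge0 => P' _; apply: mulr_ge0; apply: normr_ge0.
apply: le_trans (ler_pM T0 K0 step2 hK) _.
have -> : r%:R ^+ d * tnorm2 X * (4 * D%:R * eps) = 4 * D%:R * r%:R ^+ d * eps * tnorm2 X by ring.
by [].
Qed.
End Main.

Lemma GS2 (R : realType) n r (U : 'M[R]_n) : \rank U = r ->
  exists Q : 'M[R]_(r, n), Q *m Q^T = 1%:M /\ (U <= Q)%MS.
Proof.
move=> <-; have [Q [oQ sQ]] := GS (row_base_free U).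
by exists Q; split => //; rewrite -(eq_row_base U).
Qed.

Unset Implicit Arguments.
Theorem theorem1 (R : realType) (d n kappa r m : nat)
  (hd : (1 <= d)%N) (hn : (1 <= n)%N) (hk : (1 <= kappa)%N)
  (hkd : (kappa %| d)%N) (hr : (2 <= r)%N)
  (A : 'I_(d %/ kappa) -> 'M[R]_(m, n ^ kappa)) (eps : R)
  (hRIP : forall a, RIP (A a) eps (@S12 R n kappa))
  (hdelta : 4 * (d %/ kappa)%:R * r%:R ^+ d * eps < 1) :
  forall X : tensor R d n, hosvd_rank_le r X ->
    (1 - 4 * (d %/ kappa)%:R * r%:R ^+ d * eps) * tnorm2 X
      <= tnorm2 (multi_mode A (@treshape R d n kappa X)) /\
    tnorm2 (multi_mode A (@treshape R d n kappa X))
      <= (1 + 4 * (d %/ kappa)%:R * r%:R ^+ d * eps) * tnorm2 X.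
Proof.
move=> X [U [hU [N [u [hu hX0]]]]].
have [Q hQ] := fin_all_exists (fun j => GS2 (hU j)).
have hc : forall k j, exists c : 'rV[R]_r, u k j = c *m Q j.
  move=> k j; have /submxP [c ->] := submx_trans (hu k j) (hQ j).2.
  by exists c.
have [c hc'] := fin_all_exists (fun k => fin_all_exists (hc k)).
pose q j p t := Q j p t.
pose C (P : idx d r) := \sum_(k < N) \prod_j c k j 0 (P j).
have hq : forall j p p', \sum_(t < n) q j p t * q j p' t = (p == p')%:R.
  move=> j p p'; have := congr1 (fun M : 'M[R]_r => M p p') (hQ j).1.
  by rewrite !mxE => <-; apply: eq_bigr => t _; rewrite mxE.
have hX : forall i, X i = \sum_P C P * \prod_j q j (P j) (i j).
  move=> i; rewrite hX0.
  under eq_bigr => k _ do under eq_bigr => j _ do rewrite hc' mxE.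
  under eq_bigr => k _ do rewrite bigA_distr_bigA.
  rewrite exchange_big; apply: eq_bigr => P _; rewrite /C mulr_suml.
  by apply: eq_bigr => k _; rewrite prodM.
have := main_bound hn hk hkd hd hX hq hRIP (leq_trans (isT : (0 < 2)%N) hr) hdelta.
rewrite ler_norml => /andP [h1 h2]; split; lra.
Qed.
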